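(* Let $\bar F^a,\bar F^b:\mathbb{R}^n\times\mathbb{R}^q\times\mathbb{R}_{>0}\to\mathbb{R}^n$ be closed-loop discrete-time models. If the pair $(\bar F^a,\bar F^b)$ is REPC, then $\bar F^a$ is REPMC with $\bar F^b$ (the pair is REPMC).
   Context: $\mathcal{K}_\infty$: continuous, strictly increasing, unbounded functions $\mathbb{R}_{\ge0}\to\mathbb{R}_{\ge0}$ vanishing at $0$. REPC: the pair $(\bar F^a,\bar F^b)$ is REPC if there exists $\phi\in\mathcal{K}_\infty$ such that for each $M,E\ge0$ there exist constants $K>0$, $T^*>0$ and $\rho\in\mathcal{K}_\infty$ with $|\bar F^a(x^a,e,T)-\bar F^b(x^b,e,T)|\le(1+KT)|x^a-x^b|+T\rho(T)(\max\{|x^a|,|x^b|\}+\phi(|e|))$ for all $|x^a|,|x^b|\le M$, $|e|\le E$, $T\in(0,T^* )$. REPMC: $\bar F^a$ is REPMC with $\bar F^b$ if there exists $\phi\in\mathcal{K}_\infty$ such that for each $M,E\ge0$ and $\mathcal{T},\eta>0$ there exist $T^*=T^*(M,E,\mathcal{T},\eta)>0$ and $\alpha:\mathbb{R}_{\ge0}\times\mathbb{R}_{\ge0}\to\mathbb{R}_{\ge0}\cup\{\infty\}$ with $\alpha(\cdot,T)$ nondecreasing for all $T\in[0,T^* )$ such that: $|x^a-x^b|\le\delta$ implies $|\bar F^a(x^a,e,T)-\bar F^b(x^b,e,T)|\le\alpha(\delta,T)$ for all $|x^a|,|x^b|\le M$, $|e|\le E$, $T\in(0,T^* )$; and for every sequence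 $T_0,T_1,\dots$ in $(0,T^* )$ and $k$ with $\sum_{i=0}^{k-1}T_i\le\mathcal{T}$, $\alpha^k(0,\{T_i\}):=\alpha(\cdots\alpha(\alpha(0,T_0),T_1)\cdots,T_{k-1})\le\eta M+\phi(E)$. *)

(* Defs.v *)
From HB Require Import structures.
From mathcomp Require Import all_boot all_order all_algebra.
From mathcomp Require Import all_classical all_reals ereal topology normedtype.
Set Implicit Arguments. Unset Strict Implicit. Unset Printing Implicit Defensive.
Import Order.TTheory GRing.Theory Num.Theory.
Import numFieldNormedType.Exports.
Local Open Scope ring_scope.
Local Open Scope classical_set_scope.

Definition enorm (R : realType) (n : nat) (x : 'rV[R]_n) : R :=
  Num.sqrt (\sum_(i < n) x ord0 i ^+ 2).

(* class K_infinity, for functions R_{>=0} -> R_{>=0} (represented as R -> R,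
   only the values on [0, +oo) matter) *)
Definition Kinf (R : realType) (f : R -> R) : Prop :=
  [/\ {within `[0, +oo[, continuous f},
      (forall x y : R, 0 <= x -> x < y -> f x < f y),
      (forall x : R, 0 <= x -> 0 <= f x),
      (forall B : R, exists x : R, 0 <= x /\ B < f x) &
      f 0 = 0].

Definition model (R : realType) (n q : nat) :=
  'rV[R]_n -> 'rV[R]_q -> R -> 'rV[R]_n.

Definition REPC (R : realType) (n q : nat) (Fa Fb : model R n q) : Prop :=
  exists phi : R -> R, Kinf phi /\
  forall M E : R, 0 <= M -> 0 <= E ->
  exists K Tstar : R, 0 < K /\ 0 < Tstar /\
  exists rho : R -> R, Kinf rho /\
  forall (xa xb : 'rV[R]_n) (e : 'rV[R]_q) (T : R),
    enorm xa <= M -> enorm xb <= M -> enorm e <= E -> 0 < T -> T < Tstar ->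
    enorm (Fa xa e T - Fb xb e T)
      <= (1 + K * T) * enorm (xa - xb)
         + T * rho T * (Num.max (enorm xa) (enorm xb) + phi (enorm e)).

(* iterate alpha^k(0,{T_i}) = alpha(...alpha(alpha(0,T_0),T_1)...,T_{k-1});
   with the convention that once the value +oo is reached it stays +oo. *)
Definition alpha_step (R : realType) (alpha : R -> R -> \bar R)
  (x : \bar R) (T : R) : \bar R :=
  match x with
  | EFin r => alpha r T
  | _ => +oo%E
  end.

Fixpoint alpha_iter (R : realType) (alpha : R -> R -> \bar R)
  (Ts : nat -> R) (k : nat) : \bar R :=
  match k with
  | O => 0%E
  | S k' => alpha_step alpha (alpha_iter alpha Ts k') (Ts k')
  end.

Definition REPMC (R : realType) (n q : nat) (Fa Fb : model R n q) : Prop :=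
  exists phi : R -> R, Kinf phi /\
  forall M E Tc eta : R, 0 <= M -> 0 <= E -> 0 < Tc -> 0 < eta ->
  exists Tstar : R, 0 < Tstar /\
  exists alpha : R -> R -> \bar R,
    [/\ (forall d T : R, 0 <= d -> 0 <= T -> T < Tstar -> (0 <= alpha d T)%E),
        (forall d1 d2 T : R, 0 <= d1 -> d1 <= d2 -> 0 <= T -> T < Tstar ->
            (alpha d1 T <= alpha d2 T)%E),
        (forall (delta : R) (xa xb : 'rV[R]_n) (e : 'rV[R]_q) (T : R),
            0 <= delta ->
            enorm xa <= M -> enorm xb <= M -> enorm e <= E -> 0 < T -> T < Tstar ->
            enorm (xa - xb) <= delta ->
            ((enorm (Fa xa e T - Fb xb e T))%:E <= alpha delta T)%E) &
        (forall (Ts : nat -> R) (k : nat),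
            (forall i, 0 < Ts i /\ Ts i < Tstar) ->
            \sum_(i < k) Ts i <= Tc ->
            (alpha_iter alpha Ts k <= (eta * M + phi E)%:E)%E)].

(* Main.v *)
Require Import Defs.
From mathcomp Require Import all_boot all_order all_algebra.
From mathcomp Require Import all_classical all_reals ereal topology normedtype sequences exp ring.
Import Order.TTheory GRing.Theory Num.Theory.
Import numFieldNormedType.Exports.
Local Open Scope ring_scope.
Local Open Scope classical_set_scope.

Lemma Kinf_small (R : realType) (f : R -> R) : Kinf f ->
  forall eps : R, 0 < eps -> exists d : R, 0 < d /\ forall t, 0 < t -> t < d -> f t <= eps.
Proof.
case=> cf _ _ _ f0 eps eps0.
have [_ fa] := (continuous_within_itvcyP 0 f).1 cf.
move/cvgrPdist_lt : fa => /(_ _ eps0).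
rewrite /at_right near_withinE f0 => -[d /= d0 Hd].
exists d; split => // t t0 td.
have := Hd t; rewrite /= sub0r normrN gtr0_norm //.
move=> /(_ td t0); rewrite sub0r normrN => H.
by apply/ltW; apply: le_lt_trans H; exact: ler_norm.
Qed.

Lemma Kinf_mono (R : realType) (f : R -> R) : Kinf f ->
  forall x y, 0 <= x -> x <= y -> f x <= f y.
Proof.
case=> _ fi _ _ _ x y x0; rewrite le_eqVlt => /predU1P[->//|xy].
exact/ltW/fi.
Qed.

Lemma enorm_ge0 (R : realType) (n : nat) (x : 'rV[R]_n) : 0 <= enorm x.
Proof. exact: sqrtr_ge0. Qed.


Lemma step (R : realType) (K S T r rh eps B : R) : 0 < K -> 0 <= S -> 0 < T ->
  0 <= rh -> rh <= eps -> 0 < eps -> 0 <= B ->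
  r <= expR (K * S) * S * eps * B ->
  (1 + K * T) * r + T * rh * B <= expR (K * (S + T)) * (S + T) * eps * B.
Proof.
move=> K0 SS T0' rh0 rhT eps0 B0 Hr.
set X := expR (K * S); set Y := expR (K * T).
have X1 : 1 <= X by rewrite -expR0 ler_expR mulr_ge0 // ltW.
have Y1 : 1 + K * T <= Y by exact: expR_ge1Dx.
have Y0 : 0 <= 1 + K * T by rewrite addr_ge0 // mulr_ge0 // ltW.
have -> : expR (K * (S + T)) = X * Y by rewrite mulrDr expRD.
have eB : 0 <= eps * B by rewrite mulr_ge0 // ltW.
have XS : 0 <= X * S * eps * B.
  by rewrite -mulrA mulr_ge0 // mulr_ge0 // expR_ge0.
have h1 : (1 + K * T) * r <= Y * (X * S * eps * B).
  apply: le_trans (ler_wpM2l Y0 Hr) _.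
  exact: (ler_wpM2r XS Y1).
have XY1 : 1 <= X * Y.
  by rewrite -[1]mulr1 ler_pM // (le_trans _ Y1) // lerDl mulr_ge0 // ltW.
have h2 : T * rh * B <= X * Y * T * eps * B.
  have e1 : T * rh * B = 1 * (T * (rh * B)) by ring.
  have e2 : X * Y * T * eps * B = (X * Y) * (T * (eps * B)) by ring.
  rewrite e1 e2; apply: ler_pM => //.
    by rewrite !mulr_ge0 // ltW.
  apply: (ler_wpM2l (ltW T0')).
  by apply: (ler_wpM2r B0).
apply: le_trans (lerD h1 h2) _.
by rewrite le_eqVlt; apply/orP; left; apply/eqP; ring.
Qed.

Theorem lemma2 (R : realType) (n q : nat) (Fa Fb : model R n q) :
  REPC Fa Fb -> REPMC Fa Fb.
Proof.
move=> [phi [Kphi H]]; exists phi; split=> // M E Tc eta M0 E0 Tc0 eta0.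
have [K [T0 [K0 [T00 [rho [Krho Hb]]]]]] := H M E M0 E0.
have phiE0 : 0 <= phi E by case: Kphi => _ _ p _ _; exact: p.
have rho0 : forall T, 0 <= T -> 0 <= rho T by case: Krho => _ _ p _ _.
set B := M + phi E.
have B0 : 0 <= B by rewrite addr_ge0.
have eT0 : 0 < expR (K * Tc) * Tc by rewrite mulr_gt0 // expR_gt0.
set eps := Num.min eta 1 / (expR (K * Tc) * Tc).
have eps0 : 0 < eps by rewrite divr_gt0 // lt_min eta0 ltr01.
have [d [d0 Hd]] := @Kinf_small _ _ Krho _ eps0.
exists (Num.min T0 d); split; first by rewrite lt_min T00 d0.
exists (fun dl T => ((1 + K * T) * dl + T * rho T * B)%:E); split.
- move=> dl T dl0 T0' _; rewrite lee_fin addr_ge0 // ?mulr_ge0 // ?rho0 //.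
  by rewrite addr_ge0 // mulr_ge0 // ltW.
- move=> d1 d2 T d10 d12 T0' _; rewrite lee_fin lerD2r ler_wpM2l //.
  by rewrite addr_ge0 // mulr_ge0 // ltW.
- move=> delta xa xb e T delta0 xaM xbM eE T0' TT dl; rewrite lee_fin.
  have TT0 : T < T0 by apply: lt_le_trans TT _; rewrite ge_min lexx.
  apply: le_trans (Hb xa xb e T xaM xbM eE T0' TT0) _.
  apply: lerD.
    by rewrite ler_wpM2l // addr_ge0 // mulr_ge0 // ltW.
  have hT : 0 <= T * rho T by rewrite mulr_ge0 ?rho0 // ltW.
  rewrite ler_wpM2l //.
  apply: lerD; first by rewrite ge_max xaM xbM.
  apply: (@Kinf_mono R phi Kphi) => //; exact: enorm_ge0.
- move=> Ts k HT Hsum.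
  have Ts0 : forall i, 0 < Ts i by move=> i; case: (HT i).
  have rhoT : forall i, rho (Ts i) <= eps.
    move=> i; apply: Hd; first exact: Ts0.
    by case: (HT i) => _ /lt_le_trans; apply; rewrite ge_min lexx orbT.
  have S0 : forall k, 0 <= \sum_(i < k) Ts i.
    by move=> j; apply: sumr_ge0 => i _; exact/ltW.
  have inv : forall k, exists r, alpha_iter (fun dl T => ((1 + K * T) * dl + T * rho T * B)%:E) Ts k = r%:E /\
     r <= expR (K * (\sum_(i < k) Ts i)) * (\sum_(i < k) Ts i) * eps * B.
    elim=> [|j [r [Hj Hr]]].
      by exists 0; split; first reflexivity; rewrite !big_ord0 !(mulr0, mul0r).
    exists ((1 + K * Ts j) * r + Ts j * rho (Ts j) * B); split; first by rewrite /= Hj.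
    rewrite !big_ord_recr /=; exact: (@step R K _ _ r _ eps B K0 (S0 j) (Ts0 j) (rho0 _ (ltW (Ts0 j))) (rhoT j) eps0 B0 Hr).
  have [r [-> Hr]] := inv k.
  rewrite lee_fin; apply: (le_trans Hr).
  set S := \sum_(i < k) Ts i.
  have SS := S0 k.
  have mn0 : 0 <= Num.min eta 1 by rewrite le_min ltW // ler01.
  have h : expR (K * S) * S * eps * B <= Num.min eta 1 * B.
    apply: (ler_wpM2r B0).
    rewrite /eps mulrA ler_pdivrMr // [X in X <= _]mulrC.
    apply: (ler_wpM2l mn0).
    apply: ler_pM; rewrite ?expR_ge0 //.
    by rewrite ler_expR; apply: (ler_wpM2l (ltW K0)).
  apply: (le_trans h); rewrite /B mulrDr.
  apply: lerD; first by apply: (ler_wpM2r M0); rewrite ge_min lexx.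
  apply: le_trans (ler_wpM2r phiE0 (_ : Num.min eta 1 <= 1)) _.
    by rewrite ge_min lexx orbT.
  by rewrite mul1r.
Qed.
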